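(* Let $(Z,Z_{ac},h)$ be a normal accretive operator space and define, for $z\in M_n(Z)$, $\nu_{max}^n(z)=\inf\{h_n(z+p):p\in Z_{ac}^n\}$. Then $\nu_{max}=\{\nu_{max}^n\}$ is a $\mathbb{C}$-proper matrix gauge which induces $(Z,Z_{ac},h)$, i.e. $Z_{ac}^n=\{z:\nu_{max}^n(-z)=0\}$ and $h_n(z)=\max\{\nu_{max}^n(z),\nu_{max}^n(-z)\}$ for all $n$ and $z\in M_n(Z)$.
   Context: For a complex vector space $Z$, $M_n(Z)$ is the $n\times n$ matrices over $Z$. A cone is a set $C$ with $C+C\subseteq C$, $tC\subseteq C$ for $t\ge0$; a matrix cone is a sequence of cones $C_n\subseteq M_n(Z)$ with $X^*C_nX\subseteq C_k$ for scalar $X\in M_{n,k}$; it is $\mathbb{C}$-proper if $C_1\cap-C_1\cap iC_1\cap-iC_1=\{0\}$, making $(Z,Z_{ac})$ an accretive matrix-ordered vector space. A matrix gauge is a sequence $\{\nu_n:M_n(Z)\to[0,\infty)\}$ with $\nu_n(x+y)\le\nu_n(x)+\nu_n(y)$, $\nu_n(tx)=t\nu_n(x)$ ($t\ge0$), $\nu_k(X^*AX)\le\|X\|^2\nu_n(A)$, $\nu_{n+m}(A\oplus B)=\max\{\nu_n(A),\nu_m(B)\}$; it is $\mathbb{C}$-proper if $\nu_1(i^kz)=0$ for $k=0,1,2,3$ implies $z=0$. A hermitian matrix gauge is a $\mathbb{C}$-proper matrix gauge with $h_n(tz)=|t|h_n(z)$ for real $t$. $Z_{ac}$ is $h$-closed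 if $z_k\in Z_{ac}^n$, $h_n(z_k-z)\to0$ imply $z\in Z_{ac}^n$. $(Z,Z_{ac},h)$ is a normal accretive operator space if $(Z,Z_{ac})$ is an accretive matrix-ordered vector space, $h$ is a hermitian matrix gauge, $Z_{ac}$ is $h$-closed, and $y-x,\ z-y\in Z_{ac}^n$ imply $h_n(y)\le\max\{h_n(x),h_n(z)\}$. A matrix gauge $\nu$ induces $(Z,Z_{ac},h)$ if $Z_{ac}^n=\{z:\nu_n(-z)=0\}$ and $h_n(z)=\max\{\nu_n(z),\nu_n(-z)\}$ for all $n,z$. *)

(* Defs.v *)
From Stdlib Require Import Reals ClassicalEpsilon.
From mathcomp Require Import ssreflect ssrfun ssrbool eqtype ssrnat seq fintype bigop.

Set Implicit Arguments.
Unset Strict Implicit.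

Local Open Scope R_scope.

Definition C := (R * R)%type.
Definition C0 : C := (0, 0).
Definition C1 : C := (1, 0).
Definition Ci : C := (0, 1).
Definition RtoC (t : R) : C := (t, 0).
Definition Cadd (a b : C) : C := (fst a + fst b, snd a + snd b).
Definition Cmul (a b : C) : C :=
  (fst a * fst b - snd a * snd b, fst a * snd b + snd a * fst b).
Definition Copp (a : C) : C := (- fst a, - snd a).
Definition Cconj (a : C) : C := (fst a, - snd a).
Definition Cnorm2 (a : C) : R := fst a * fst a + snd a * snd a.

Record CVS := {
  car :> Type;
  vadd : car -> car -> car;
  vzero : car;
  vopp : car -> car;
  vscal : C -> car -> car;
  vaddA : forall x y z, vadd x (vadd y z) = vadd (vadd x y) z;
  vaddC : forall x y, vadd x y = vadd y x;
  vadd0 : forall x, vadd vzero x = x;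
  vaddN : forall x, vadd (vopp x) x = vzero;
  vscal1 : forall x, vscal C1 x = x;
  vscalA : forall a b x, vscal a (vscal b x) = vscal (Cmul a b) x;
  vscalDv : forall a x y, vscal a (vadd x y) = vadd (vscal a x) (vscal a y);
  vscalDs : forall a b x, vscal (Cadd a b) x = vadd (vscal a x) (vscal b x)
}.

Definition Mat (Z : CVS) (n k : nat) := 'I_n -> 'I_k -> Z.
Definition SMat (n k : nat) := 'I_n -> 'I_k -> C.

Section MatOps.
Variable Z : CVS.

Definition madd n (A B : Mat Z n n) : Mat Z n n := fun i j => vadd (A i j) (B i j).
Definition mopp n (A : Mat Z n n) : Mat Z n n := fun i j => vopp (A i j).
Definition msub n (A B : Mat Z n n) : Mat Z n n := madd A (mopp B).
Definition mscal n (a : C) (A : Mat Z n n) : Mat Z n n := fun i j => vscal a (A i j).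
Definition mzero n : Mat Z n n := fun _ _ => vzero Z.

(* X^* A X, for X in M_{n,k}(C) and A in M_n(Z):
   (X^* A X)_{ij} = sum_{p,q} conj(X_{pi}) X_{qj} A_{pq} *)
Definition congr_mx n k (X : SMat n k) (A : Mat Z n n) : Mat Z k k :=
  fun i j => \big[@vadd Z / vzero Z]_(p < n) \big[@vadd Z / vzero Z]_(q < n)
               vscal (Cmul (Cconj (X p i)) (X q j)) (A p q).

Definition dsum n m (A : Mat Z n n) (B : Mat Z m m) : Mat Z (n + m) (n + m) :=
  fun i j => match split i, split j with
             | inl a, inl b => A a b
             | inr a, inr b => B a b
             | _, _ => vzero Z
             end.
End MatOps.

Definition smx_apply n k (X : SMat n k) (v : 'I_k -> C) : 'I_n -> C :=
  fun p => \big[Cadd/C0]_(q < k) Cmul (X p q) (v q).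
Definition cvnorm k (v : 'I_k -> C) : R := sqrt (\big[Rplus/0]_(q < k) Cnorm2 (v q)).

Definition Rsup (E : R -> Prop) : R := epsilon (inhabits 0) (fun r => is_lub E r).
Definition is_lower_bound (E : R -> Prop) (m : R) := forall x, E x -> m <= x.
Definition is_glb (E : R -> Prop) (m : R) :=
  is_lower_bound E m /\ forall b, is_lower_bound E b -> b <= m.
Definition Rinf (E : R -> Prop) : R := epsilon (inhabits 0) (fun r => is_glb E r).

Definition opnorm n k (X : SMat n k) : R :=
  Rsup (fun r => exists v : 'I_k -> C, cvnorm v <= 1 /\ r = cvnorm (smx_apply X v)).

Section Cones.
Variable Z : CVS.

Definition is_cone n (K : Mat Z n n -> Prop) :=
  (forall x y, K x -> K y -> K (madd x y)) /\
  (forall t x, 0 <= t -> K x -> K (mscal (RtoC t) x)).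

Definition is_matrix_cone (K : forall n, Mat Z n n -> Prop) :=
  (forall n, (0 < n)%nat -> is_cone (K n)) /\
  (forall n k (X : SMat n k) (A : Mat Z n n), (0 < n)%nat -> (0 < k)%nat ->
      K n A -> K k (congr_mx X A)).

(* C_1 ∩ -C_1 ∩ iC_1 ∩ -iC_1 = {0} *)
Definition cone_CProper (K : forall n, Mat Z n n -> Prop) :=
  forall z : Mat Z 1 1,
    (K 1%nat z /\
     (exists w, K 1%nat w /\ z = mscal (Copp C1) w) /\
     (exists w, K 1%nat w /\ z = mscal Ci w) /\
     (exists w, K 1%nat w /\ z = mscal (Copp Ci) w)) <-> z = @mzero Z 1%nat.

Definition accretive_mosp (K : forall n, Mat Z n n -> Prop) :=
  is_matrix_cone K /\ cone_CProper K.

Definition is_matrix_gauge (nu : forall n, Mat Z n n -> R) :=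
  (forall n (x : Mat Z n n), (0 < n)%nat -> 0 <= nu n x) /\
  (forall n (x y : Mat Z n n), (0 < n)%nat -> nu n (madd x y) <= nu n x + nu n y) /\
  (forall n t (x : Mat Z n n), (0 < n)%nat -> 0 <= t ->
      nu n (mscal (RtoC t) x) = t * nu n x) /\
  (forall n k (X : SMat n k) (A : Mat Z n n), (0 < n)%nat -> (0 < k)%nat ->
      nu k (congr_mx X A) <= (opnorm X) ^ 2 * nu n A) /\
  (forall n m (A : Mat Z n n) (B : Mat Z m m), (0 < n)%nat -> (0 < m)%nat ->
      nu (n + m)%nat (dsum A B) = Rmax (nu n A) (nu m B)).

Definition gauge_CProper (nu : forall n, Mat Z n n -> R) :=
  forall z : Mat Z 1 1,
    nu 1%nat z = 0 -> nu 1%nat (mscal Ci z) = 0 ->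
    nu 1%nat (mscal (Copp C1) z) = 0 -> nu 1%nat (mscal (Copp Ci) z) = 0 ->
    z = @mzero Z 1%nat.

Definition is_CProper_matrix_gauge nu := is_matrix_gauge nu /\ gauge_CProper nu.

Definition is_hermitian_matrix_gauge (h : forall n, Mat Z n n -> R) :=
  is_CProper_matrix_gauge h /\
  (forall n t (z : Mat Z n n), (0 < n)%nat -> h n (mscal (RtoC t) z) = Rabs t * h n z).

Definition h_closed (K : forall n, Mat Z n n -> Prop) (h : forall n, Mat Z n n -> R) :=
  forall n (zs : nat -> Mat Z n n) (z : Mat Z n n), (0 < n)%nat ->
    (forall k, K n (zs k)) -> Un_cv (fun k => h n (msub (zs k) z)) 0 -> K n z.

Definition normal_accretive_operator_space
    (K : forall n, Mat Z n n -> Prop) (h : forall n, Mat Z n n -> R) :=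
  accretive_mosp K /\ is_hermitian_matrix_gauge h /\ h_closed K h /\
  (forall n (x y z : Mat Z n n), (0 < n)%nat ->
     K n (msub y x) -> K n (msub z y) -> h n y <= Rmax (h n x) (h n z)).

Definition induces (nu : forall n, Mat Z n n -> R)
    (K : forall n, Mat Z n n -> Prop) (h : forall n, Mat Z n n -> R) :=
  forall n, (0 < n)%nat ->
    (forall z : Mat Z n n, K n z <-> nu n (mopp z) = 0) /\
    (forall z : Mat Z n n, h n z = Rmax (nu n z) (nu n (mopp z))).

Definition nu_max (K : forall n, Mat Z n n -> Prop) (h : forall n, Mat Z n n -> R)
    n (z : Mat Z n n) : R :=
  Rinf (fun r => exists p, K n p /\ r = h n (madd z p)).
End Cones.

(* Main.v *)
From Pilot Require Import Defs.
From Stdlib Require Import Reals Lra ClassicalEpsilon FunctionalExtensionality.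
From HB Require Import structures.
From mathcomp Require Import ssreflect ssrfun ssrbool eqtype ssrnat seq fintype bigop.
Import Pilot.Defs.
Set Implicit Arguments.
Unset Strict Implicit.
Local Open Scope R_scope.

Lemma glb_exists (E : R -> Prop) : (exists x, E x) -> is_lower_bound E 0 ->
  is_glb E (Rinf E).
Proof.
move=> [x Ex] lb.
have H : exists m, is_glb E m.
  have bnd : bound (fun y => E (- y)).
    exists 0 => y Ey; have := lb _ Ey; lra.
  have ne : exists y, E (- y) by exists (- x); rewrite Ropp_involutive.
  have [l [ub lub]] := completeness _ bnd ne.
  exists (- l); split.
  - move=> y Ey. have : - y <= l by apply: ub; rewrite Ropp_involutive. lra.
  - move=> b Hb. have : l <= - b. apply: lub => y Ey. have := Hb _ Ey; lra. lra.
rewrite /Rinf. exact: (epsilon_spec (inhabits 0) (fun r => is_glb E r) H).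
Qed.

Lemma le_of_eps a b : (forall e, 0 < e -> a <= b + e) -> a <= b.
Proof.
move=> H; apply: Rnot_lt_le => Hlt.
have := H ((a - b)/2) ltac:(lra). lra.
Qed.

Lemma glb_approx E m e : is_glb E m -> 0 < e -> exists x, E x /\ x < m + e.
Proof.
move=> [lb glb] He. apply: NNPP => Hn.
have : m + e <= m. apply: glb => x Ex. apply: Rnot_lt_le => Hx. apply: Hn; by exists x.
lra.
Qed.

Lemma Ceq (a b : Defs.C) : fst a = fst b -> snd a = snd b -> a = b.
Proof. case: a => ? ?; case: b => ? ? /= -> -> //. Qed.

Lemma Cadd_A : associative Cadd. Proof. move=> a b c; apply: Ceq => /=; ring. Qed.
Lemma Cadd_C : commutative Cadd. Proof. move=> a b; apply: Ceq => /=; ring. Qed.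
Lemma Cadd_0 : left_id C0 Cadd. Proof. move=> a; apply: Ceq => /=; ring. Qed.
HB.instance Definition _ := Monoid.isComLaw.Build Defs.C C0 Cadd Cadd_A Cadd_C Cadd_0.

Lemma Rplus_A : associative Rplus. Proof. move=> *; ring. Qed.
Lemma Rplus_C : commutative Rplus. Proof. move=> *; ring. Qed.
Lemma Rplus_0 : left_id 0 Rplus. Proof. move=> *; ring. Qed.
HB.instance Definition _ := Monoid.isComLaw.Build R 0 Rplus Rplus_A Rplus_C Rplus_0.

Lemma CaddC0 : Cadd C0 C0 = C0. Proof. apply: Ceq => /=; ring. Qed.
Lemma Cmul1l a : Cmul C1 a = a. Proof. apply: Ceq => /=; ring. Qed.
Lemma Cmul0l a : Cmul C0 a = C0. Proof. apply: Ceq => /=; ring. Qed.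

Section V.
Variable Z : CVS.
HB.instance Definition _ := Monoid.isComLaw.Build (car Z) (vzero Z) (@vadd Z) (@vaddA Z) (@vaddC Z) (@vadd0 Z).

Local Notation "x + y" := (vadd x y).
Local Notation "- x" := (vopp x).
Local Notation "0" := (vzero Z).

Lemma vadd0r (x : Z) : x + 0 = x. Proof. by rewrite vaddC vadd0. Qed.
Lemma vaddNr (x : Z) : x + - x = 0. Proof. by rewrite vaddC vaddN. Qed.
Lemma vcancel (a x y : Z) : a + x = a + y -> x = y.
Proof. move=> H. by rewrite -(vadd0 x) -(vaddN a) -vaddA H vaddA vaddN vadd0. Qed.
Lemma voppK (x : Z) : - - x = x.
Proof. apply: (@vcancel (- x)). by rewrite vaddNr vaddN. Qed.
Lemma voppD (x y : Z) : - (x + y) = - x + - y.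
Proof. apply: (@vcancel (x + y)). rewrite vaddNr.
rewrite [- x + _]vaddC vaddA -[x + y + _]vaddA vaddNr vadd0r vaddNr //. Qed.
Lemma vopp0 : - 0 = 0 :> Z.
Proof. apply: (@vcancel 0). by rewrite vaddNr vadd0. Qed.
Lemma vscal0 a : vscal a 0 = 0.
Proof. apply: (@vcancel (vscal a 0)). by rewrite -vscalDv !vadd0r. Qed.
Lemma vscalC0 (x : Z) : vscal C0 x = 0.
Proof. apply: (@vcancel (vscal C0 x)). by rewrite -vscalDs CaddC0 vadd0r. Qed.
Lemma vscalm1 (x : Z) : vscal (Copp C1) x = - x.
Proof.
apply: (@vcancel x). rewrite vaddNr -{1}(vscal1 x) -vscalDs.
have -> : Cadd C1 (Copp C1) = C0 by apply: Ceq => /=; ring.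
exact: vscalC0.
Qed.
Lemma mx_ext n k (A B : Mat Z n k) : (forall i j, A i j = B i j) -> A = B.
Proof. move=> H; apply: functional_extensionality => i; apply: functional_extensionality => j; exact: H. Qed.

Lemma split_l n m (a : 'I_n) : split (lshift m a) = inl a.
Proof. exact: (unsplitK (inl a)). Qed.
Lemma split_r n m (a : 'I_m) : split (rshift n a) = inr a.
Proof. exact: (unsplitK (inr a)). Qed.
Lemma lr_neq n m (a : 'I_n) (b : 'I_m) : (lshift m a == rshift n b) = false.
Proof. apply/eqP => H; have := congr1 split H; by rewrite split_l split_r. Qed.

Lemma congr_madd n k (X : SMat n k) (A B : Mat Z n n) :
  congr_mx X (madd A B) = madd (congr_mx X A) (congr_mx X B).
Proof.
apply: mx_ext => i j; rewrite /congr_mx /madd -big_split /=.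
apply: eq_bigr => p _; rewrite -big_split /=; apply: eq_bigr => q _.
by rewrite vscalDv.
Qed.

Lemma congr_mzero n k (X : SMat n k) : congr_mx X (@mzero Z n) = @mzero Z k.
Proof.
apply: mx_ext => i j; rewrite /congr_mx /mzero big1 // => p _.
by rewrite big1 // => q _; rewrite vscal0.
Qed.

Definition emb N k (f : 'I_k -> 'I_N) : SMat N k := fun p i => if p == f i then C1 else C0.
Definition embT N k (f : 'I_k -> 'I_N) : SMat k N := fun a i => if i == f a then C1 else C0.

Lemma coefE (b c : bool) (x : Z) :
  vscal (Cmul (Cconj (if b then C1 else C0)) (if c then C1 else C0)) x = if b && c then x else 0.
Proof.
case: b; case: c => /=.
- have -> : Cmul (Cconj C1) C1 = C1 by apply: Ceq => /=; ring. exact: vscal1.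
- have -> : Cmul (Cconj C1) C0 = C0 by apply: Ceq => /=; ring. exact: vscalC0.
- have -> : Cmul (Cconj C0) C1 = C0 by apply: Ceq => /=; ring. exact: vscalC0.
- have -> : Cmul (Cconj C0) C0 = C0 by apply: Ceq => /=; ring. exact: vscalC0.
Qed.

Lemma sum_delta n (a : 'I_n) (F : 'I_n -> Z) :
  \big[@vadd Z/vzero Z]_(p < n) (if p == a then F p else 0) = F a.
Proof. by rewrite -big_mkcond big_pred1_eq. Qed.

Lemma congr_gen n k (X : SMat n k) (A : Mat Z n n) i j (P : 'I_k -> 'I_n -> bool) :
  (forall p i, X p i = if P i p then C1 else C0) ->
  congr_mx X A i j = \big[@vadd Z/vzero Z]_(p < n) \big[@vadd Z/vzero Z]_(q < n)
      (if P i p && P j q then A p q else 0).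
Proof.
move=> HX; rewrite /congr_mx; apply: eq_bigr => p _; apply: eq_bigr => q _.
by rewrite !HX coefE.
Qed.

Lemma congr_emb N k (f : 'I_k -> 'I_N) (Y : Mat Z N N) i j :
  congr_mx (emb f) Y i j = Y (f i) (f j).
Proof.
rewrite (@congr_gen _ _ _ _ _ _ (fun i p => p == f i)) //.
rewrite -(sum_delta (f i) (fun p => Y p (f j))); apply: eq_bigr => p _.
case: (p == f i) => /=; first by rewrite sum_delta.
by rewrite big1.
Qed.

Lemma congr_embT N k (f : 'I_k -> 'I_N) (finj : injective f) (Y : Mat Z k k) i j :
  congr_mx (embT f) Y i j =
  \big[@vadd Z/vzero Z]_(p < k) \big[@vadd Z/vzero Z]_(q < k)
      (if (i == f p) && (j == f q) then Y p q else 0).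
Proof. exact: (@congr_gen _ _ _ _ _ _ (fun i p => i == f p)). Qed.

Lemma congr_embT_val N k (f : 'I_k -> 'I_N) (finj : injective f) (Y : Mat Z k k) a b :
  congr_mx (embT f) Y (f a) (f b) = Y a b.
Proof.
rewrite congr_embT //.
rewrite -(sum_delta a (fun p => Y p b)); apply: eq_bigr => p _.
rewrite (inj_eq finj) eq_sym.
case: (p == a) => /=; last by rewrite big1.
rewrite -(sum_delta b (fun q => Y p q)); apply: eq_bigr => q _.
by rewrite (inj_eq finj) eq_sym.
Qed.

Lemma congr_embT_off N k (f : 'I_k -> 'I_N) (finj : injective f) (Y : Mat Z k k) i j :
  (forall a, (i == f a) = false) \/ (forall b, (j == f b) = false) ->
  congr_mx (embT f) Y i j = 0.
Proof.
move=> H; rewrite congr_embT // big1 // => p _; rewrite big1 // => q _.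
case: H => ->; first by []. by rewrite andbF.
Qed.

Lemma dsum_embT n m (P : Mat Z n n) (Q : Mat Z m m) :
  dsum P Q = madd (congr_mx (embT (@lshift n m)) P) (congr_mx (embT (@rshift n m)) Q).
Proof.
have il := @lshift_inj n m; have ir := @rshift_inj n m.
apply: mx_ext => i j; rewrite /madd /dsum.
rewrite -(splitK i) -(splitK j).
case: (split i) => a; case: (split j) => b /=;
  rewrite ?split_l ?split_r.
- rewrite congr_embT_val // (congr_embT_off (f:=@rshift n m)) //; first by rewrite vadd0r.
  left => c; exact: lr_neq.
- rewrite (congr_embT_off (f:=@rshift n m)) // ?(congr_embT_off (f:=@lshift n m)) ?vadd0 //.
  + right => c; by rewrite eq_sym lr_neq.
  + left => c; by rewrite lr_neq.
- rewrite (congr_embT_off (f:=@rshift n m)) // ?(congr_embT_off (f:=@lshift n m)) ?vadd0 //.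
  + left => c; by rewrite eq_sym lr_neq.
  + right => c; by rewrite lr_neq.
- rewrite congr_embT_val // (congr_embT_off (f:=@lshift n m)) //; first by rewrite vadd0.
  left => c; by rewrite eq_sym lr_neq.
Qed.

Lemma congr_emb_dsum_l n m (A : Mat Z n n) (B : Mat Z m m) :
  congr_mx (emb (@lshift n m)) (dsum A B) = A.
Proof. apply: mx_ext => i j; by rewrite congr_emb /dsum !split_l. Qed.
Lemma congr_emb_dsum_r n m (A : Mat Z n n) (B : Mat Z m m) :
  congr_mx (emb (@rshift n m)) (dsum A B) = B.
Proof. apply: mx_ext => i j; by rewrite congr_emb /dsum !split_r. Qed.

Lemma dsum_madd n m (A P : Mat Z n n) (B Q : Mat Z m m) :
  madd (dsum A B) (dsum P Q) = dsum (madd A P) (madd B Q).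
Proof.
apply: mx_ext => i j; rewrite /madd /dsum.
case: (split i) => a; case: (split j) => b //=; exact: vadd0.
Qed.
End V.

Lemma opnorm_le1 n k (X : SMat n k) :
  (forall v, cvnorm (smx_apply X v) <= cvnorm v) -> opnorm X ^ 2 <= 1.
Proof.
move=> HX.
set E := (fun r => exists v : 'I_k -> Defs.C, cvnorm v <= 1 /\ r = cvnorm (smx_apply X v)).
have v0 : cvnorm (fun _ : 'I_k => C0) = 0.
  rewrite /cvnorm big1 ?sqrt_0 // => q _; rewrite /Cnorm2 /=; ring.
have E0 : E (cvnorm (smx_apply X (fun _ => C0))).
  exists (fun _ => C0); split => //; rewrite v0; lra.
have Hb : bound E.
  exists 1 => r [v [Hv ->]]; have := HX v; lra.
have [l Hl] := completeness E Hb (ex_intro _ _ E0).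
have Hs : is_lub E (opnorm X).
  rewrite /opnorm /Rsup. exact: (epsilon_spec (inhabits 0) (fun r => is_lub E r) (ex_intro _ l Hl)).
case: Hs => ub lub.
have h1 : opnorm X <= 1 by apply: lub => r [v [Hv ->]]; have := HX v; lra.
have h0 : 0 <= opnorm X.
  apply: Rle_trans (ub _ E0). rewrite /cvnorm; exact: sqrt_pos.
simpl; nra.
Qed.

Lemma Cmul_if (c : bool) x : Cmul (if c then C1 else C0) x = if c then x else C0.
Proof. case: c; [exact: Cmul1l | exact: Cmul0l]. Qed.

Lemma smx_emb_at N k (f : 'I_k -> 'I_N) (finj : injective f) v a :
  smx_apply (emb f) v (f a) = v a.
Proof.
rewrite /smx_apply /emb.
under eq_bigr => q _ do rewrite (inj_eq finj) eq_sym Cmul_if.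
by rewrite -big_mkcond big_pred1_eq.
Qed.

Lemma smx_emb_off N k (f : 'I_k -> 'I_N) v p :
  (forall q, (p == f q) = false) -> smx_apply (emb f) v p = C0.
Proof.
move=> H; rewrite /smx_apply /emb big1 // => q _; by rewrite H Cmul0l.
Qed.

Lemma Cnorm2_0 : Cnorm2 C0 = 0. Proof. rewrite /Cnorm2 /=; ring. Qed.

Lemma cvnorm_emb_l n m v : cvnorm (smx_apply (emb (@lshift n m)) v) = cvnorm v.
Proof.
rewrite /cvnorm big_split_ord /=. f_equal.
rewrite [X in _ + X]big1 ?Rplus_0_r.
  apply: eq_bigr => q _; by rewrite smx_emb_at //; exact: lshift_inj.
move=> q _; rewrite smx_emb_off ?Cnorm2_0 // => c; by rewrite eq_sym lr_neq.
Qed.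

Lemma cvnorm_emb_r n m v : cvnorm (smx_apply (emb (@rshift n m)) v) = cvnorm v.
Proof.
rewrite /cvnorm big_split_ord /=. f_equal.
rewrite [X in X + _]big1 ?Rplus_0_l.
  apply: eq_bigr => q _; by rewrite smx_emb_at //; exact: rshift_inj.
move=> q _; rewrite smx_emb_off ?Cnorm2_0 // => c; by rewrite lr_neq.
Qed.

Lemma opnorm_emb_l n m : opnorm (emb (@lshift n m)) ^ 2 <= 1.
Proof. apply: opnorm_le1 => v; rewrite cvnorm_emb_l; lra. Qed.
Lemma opnorm_emb_r n m : opnorm (emb (@rshift n m)) ^ 2 <= 1.
Proof. apply: opnorm_le1 => v; rewrite cvnorm_emb_r; lra. Qed.

Section MX.
Variable Z : CVS.
Implicit Types (n : nat).
Local Ltac ent := apply: mx_ext => i j; rewrite /msub /madd /mopp /mscal /mzero.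

Lemma maddC n (A B : Mat Z n n) : madd A B = madd B A.
Proof. ent; exact: vaddC. Qed.
Lemma madd0r n (A : Mat Z n n) : madd A (@mzero Z n) = A.
Proof. ent; exact: vadd0r. Qed.
Lemma madd4 n (x y p q : Mat Z n n) : madd (madd x y) (madd p q) = madd (madd x p) (madd y q).
Proof. ent. rewrite !vaddA; congr vadd; rewrite -!vaddA; congr vadd; exact: vaddC. Qed.
Lemma moppE n (z : Mat Z n n) : mopp z = mscal (RtoC (-1)) z.
Proof.
ent. have -> : RtoC (-1) = Copp C1 by apply: Ceq => /=; ring. by rewrite vscalm1.
Qed.
Lemma mscal0 n (x : Mat Z n n) : mscal (RtoC 0) x = @mzero Z n.
Proof. ent. have -> : RtoC 0 = C0 by []. exact: vscalC0. Qed.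
Lemma mscalz n a : mscal a (@mzero Z n) = @mzero Z n.
Proof. ent; exact: vscal0. Qed.
Lemma msub_addK n (z p : Mat Z n n) : msub (madd z p) z = p.
Proof. ent. by rewrite vaddC vaddA vaddN vadd0. Qed.
Lemma msub_subK n (z q : Mat Z n n) : msub z (madd z (mopp q)) = q.
Proof. ent. by rewrite voppD voppK vaddA vaddNr vadd0. Qed.
Lemma msubE n (p z : Mat Z n n) : msub p z = madd (mopp z) p.
Proof. ent; exact: vaddC. Qed.
Lemma mopp_madd n (a b : Mat Z n n) : mopp (madd a b) = madd (mopp a) (mopp b).
Proof. ent; exact: voppD. Qed.
Lemma moppK n (a : Mat Z n n) : mopp (mopp a) = a.
Proof. ent; exact: voppK. Qed.
Lemma mscal_madd n c (x y : Mat Z n n) : mscal c (madd x y) = madd (mscal c x) (mscal c y).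
Proof. ent; exact: vscalDv. Qed.
Lemma mscal_inv n t (p : Mat Z n n) : t <> 0 -> mscal (RtoC t) (mscal (RtoC (/ t)) p) = p.
Proof.
move=> Ht; ent. rewrite vscalA.
have -> : Cmul (RtoC t) (RtoC (/ t)) = C1 by apply: Ceq => /=; field.
exact: vscal1.
Qed.
Lemma mscalA n a b (p : Mat Z n n) : mscal a (mscal b p) = mscal (Cmul a b) p.
Proof. ent; exact: vscalA. Qed.
Lemma mscal1 n (p : Mat Z n n) : mscal C1 p = p.
Proof. ent; exact: vscal1. Qed.
End MX.

Section Main.
Variable Z : CVS.
Local Unset Implicit Arguments.
Variable K : forall n, Mat Z n n -> Prop.
Variable h : forall n, Mat Z n n -> R.
Local Set Implicit Arguments.
Hypothesis HN : normal_accretive_operator_space K h.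

Lemma Kadd n x y : (0 < n)%N -> K n x -> K n y -> K n (madd x y).
Proof. case: HN => [[[Kc _] _] _] Hn; exact: (proj1 (Kc n Hn)). Qed.
Lemma Kscal n t x : (0 < n)%N -> 0 <= t -> K n x -> K n (mscal (RtoC t) x).
Proof. case: HN => [[[Kc _] _] _] Hn; exact: (proj2 (Kc n Hn)). Qed.
Lemma Kcongr n k (X : SMat n k) A : (0 < n)%N -> (0 < k)%N -> K n A -> K k (congr_mx X A).
Proof. case: HN => [[[_ Kc] _] _]; exact: Kc. Qed.
Lemma K0 n : (0 < n)%N -> K n (@mzero Z n).
Proof.
case: HN => [[_ KCP] _] Hn.
have [H1 _] := proj2 (KCP (@mzero Z 1)) erefl.
rewrite -(@congr_mzero Z _ _ (fun (_ : 'I_1) (_ : 'I_n) => C0)).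
exact: Kcongr.
Qed.
Lemma h0 n x : (0 < n)%N -> 0 <= h n x.
Proof. case: HN => [_ [[[[H _] _] _] _]]; exact: H. Qed.
Lemma hadd n x y : (0 < n)%N -> h n (madd x y) <= h n x + h n y.
Proof. case: HN => [_ [[[[_ [H _]] _] _] _]]; exact: H. Qed.
Lemma hcongr n k (X : SMat n k) A : (0 < n)%N -> (0 < k)%N ->
  h k (congr_mx X A) <= (opnorm X) ^ 2 * h n A.
Proof. case: HN => [_ [[[[_ [_ [_ [H _]]]] _] _] _]]; exact: H. Qed.
Lemma hdsum n m A B : (0 < n)%N -> (0 < m)%N -> h (n + m)%N (dsum A B) = Rmax (h n A) (h m B).
Proof. case: HN => [_ [[[[_ [_ [_ [_ H]]]] _] _] _]]; exact: H. Qed.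
Lemma hherm n t z : (0 < n)%N -> h n (mscal (RtoC t) z) = Rabs t * h n z.
Proof. case: HN => [_ [[_ H] _]]; exact: H. Qed.
Lemma hopp n z : (0 < n)%N -> h n (mopp z) = h n z.
Proof. move=> Hn; rewrite moppE hherm // Rabs_Ropp Rabs_R1; ring. Qed.
Lemma hzero n : (0 < n)%N -> h n (@mzero Z n) = 0.
Proof. move=> Hn; rewrite -(mscal0 (@mzero Z n)) hherm // Rabs_R0; ring. Qed.

Definition nuset n (z : Mat Z n n) := fun r => exists p, K n p /\ r = h n (madd z p).
Lemma nu_glb n (z : Mat Z n n) : (0 < n)%N -> is_glb (nuset z) (nu_max K h z).
Proof.
move=> Hn; apply: glb_exists.
  exists (h n (madd z (@mzero Z n))), (@mzero Z n); split => //; exact: K0.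
move=> r [p [_ ->]]; exact: h0.
Qed.
Lemma nu_le n (z p : Mat Z n n) : (0 < n)%N -> K n p -> nu_max K h z <= h n (madd z p).
Proof. move=> Hn Hp; apply: (proj1 (nu_glb z Hn)); by exists p. Qed.
Lemma nu_ge n (z : Mat Z n n) b : (0 < n)%N -> (forall p, K n p -> b <= h n (madd z p)) -> b <= nu_max K h z.
Proof. move=> Hn H; apply: (proj2 (nu_glb z Hn)) => r [p [Hp ->]]; exact: H. Qed.
Lemma nu_approx n (z : Mat Z n n) e : (0 < n)%N -> 0 < e ->
  exists p, K n p /\ h n (madd z p) < nu_max K h z + e.
Proof.
move=> Hn He; have [r [[p [Hp ->]] Hr]] := glb_approx (nu_glb z Hn) He.
by exists p.
Qed.
Lemma nu_ge0 n (z : Mat Z n n) : (0 < n)%N -> 0 <= nu_max K h z.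
Proof. move=> Hn; apply: nu_ge => // p _; exact: h0. Qed.

Lemma hnorm n (x y w : Mat Z n n) : (0 < n)%N ->
  K n (msub y x) -> K n (msub w y) -> h n y <= Rmax (h n x) (h n w).
Proof. case: HN => [_ [_ [_ H]]]; exact: H. Qed.
Lemma hclosed' n (zs : nat -> Mat Z n n) z : (0 < n)%N ->
  (forall k, K n (zs k)) -> Un_cv (fun k => h n (msub (zs k) z)) 0 -> K n z.
Proof. case: HN => [_ [_ [H _]]]; exact: H. Qed.
Lemma KCP z : (K 1%N z /\
     (exists w, K 1%N w /\ z = mscal (Copp C1) w) /\
     (exists w, K 1%N w /\ z = mscal Ci w) /\
     (exists w, K 1%N w /\ z = mscal (Copp Ci) w)) -> z = @mzero Z 1%N.
Proof. case: HN => [[_ H] _]; exact: (proj1 (H z)). Qed.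

Local Notation nu := (nu_max K h).

Lemma nu_add n (x y : Mat Z n n) : (0 < n)%N -> nu (madd x y) <= nu x + nu y.
Proof.
move=> Hn; apply: le_of_eps => e He.
have [p [Hp Hpx]] := nu_approx x Hn (ltac:(lra) : 0 < e/2).
have [q [Hq Hqy]] := nu_approx y Hn (ltac:(lra) : 0 < e/2).
apply: Rle_trans (nu_le (madd x y) Hn (Kadd Hn Hp Hq)) _.
rewrite madd4. have := hadd (madd x p) (madd y q) Hn. lra.
Qed.

Lemma nu_zero n : (0 < n)%N -> nu (@mzero Z n) = 0.
Proof.
move=> Hn; apply: Rle_antisym; last exact: nu_ge0.
have := nu_le (@mzero Z n) Hn (K0 Hn). by rewrite madd0r hzero.
Qed.

Lemma nu_scal n t (x : Mat Z n n) : (0 < n)%N -> 0 <= t -> nu (mscal (RtoC t) x) = t * nu x.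
Proof.
move=> Hn Ht; case: (Rle_lt_or_eq _ _ Ht) => [Htp|<-].
- apply: Rle_antisym.
  + have : nu (mscal (RtoC t) x) / t <= nu x.
      apply: nu_ge => // p Hp.
      have := nu_le (mscal (RtoC t) x) Hn (Kscal Hn Ht Hp).
      rewrite -mscal_madd hherm // Rabs_pos_eq //.
      move=> H; apply: (Rmult_le_reg_l t) => //.
      have -> : t * (nu (mscal (RtoC t) x) / t) = nu (mscal (RtoC t) x) by field; lra.
      exact: H.
    move=> H. have -> : nu (mscal (RtoC t) x) = t * (nu (mscal (RtoC t) x) / t) by field; lra.
    apply: Rmult_le_compat_l => //.
  + apply: nu_ge => // p Hp.
    rewrite -(mscal_inv p (ltac:(lra) : t <> 0)) -mscal_madd hherm // Rabs_pos_eq //.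
    apply: Rmult_le_compat_l => //. apply: nu_le => //.
    apply: Kscal => //. apply: Rlt_le; exact: Rinv_0_lt_compat.
- rewrite mscal0 nu_zero //; ring.
Qed.

Lemma nu_congr n k (X : SMat n k) (A : Mat Z n n) : (0 < n)%N -> (0 < k)%N ->
  nu (congr_mx X A) <= opnorm X ^ 2 * nu A.
Proof.
move=> Hn Hk. set c := opnorm X ^ 2.
have c0 : 0 <= c by rewrite /c; apply: pow2_ge_0.
have key : forall p, K n p -> nu (congr_mx X A) <= c * h n (madd A p).
  move=> p Hp. apply: Rle_trans (nu_le (congr_mx X A) Hk (Kcongr X Hn Hk Hp)) _.
  rewrite -congr_madd. exact: hcongr.
case: (Rle_lt_or_eq _ _ c0) => [cp|c_0].
- have : nu (congr_mx X A) / c <= nu A.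
    apply: nu_ge => // p Hp. have := key p Hp => H.
    apply: (Rmult_le_reg_l c) => //.
    have -> : c * (nu (congr_mx X A) / c) = nu (congr_mx X A) by field; lra.
    exact: H.
  move=> H. have -> : nu (congr_mx X A) = c * (nu (congr_mx X A) / c) by field; lra.
  apply: Rmult_le_compat_l => //.
- have := key _ (K0 Hn). rewrite -c_0 !Rmult_0_l => H.
  apply: Rle_trans H _. lra.
Qed.

Lemma nu_dsum n m (A : Mat Z n n) (B : Mat Z m m) : (0 < n)%N -> (0 < m)%N ->
  nu (dsum A B) = Rmax (nu A) (nu B).
Proof.
move=> Hn Hm.
have Hnm : (0 < n + m)%N by rewrite addn_gt0 Hn.
apply: Rle_antisym.
- apply: le_of_eps => e He.
  have [p [Hp HpA]] := nu_approx A Hn He.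
  have [q [Hq HqB]] := nu_approx B Hm He.
  have Kpq : K (n + m)%N (dsum p q).
    rewrite dsum_embT; apply: Kadd => //; apply: Kcongr => //.
  apply: Rle_trans (nu_le (dsum A B) Hnm Kpq) _.
  rewrite dsum_madd hdsum //.
  apply: Rmax_lub.
  + have := Rmax_l (nu A) (nu B); lra.
  + have := Rmax_r (nu A) (nu B); lra.
- apply: Rmax_lub.
  + apply: nu_ge => // P HP.
    have := nu_le A Hn (Kcongr (emb (@lshift n m)) Hnm Hn HP).
    rewrite -[X in h n (madd X _)](congr_emb_dsum_l A B) -congr_madd => H.
    apply: Rle_trans H _.
    have := hcongr (emb (@lshift n m)) (madd (dsum A B) P) Hnm Hn.
    have := opnorm_emb_l n m. have := h0 (madd (dsum A B) P) Hnm. nra.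
  + apply: nu_ge => // P HP.
    have := nu_le B Hm (Kcongr (emb (@rshift n m)) Hnm Hm HP).
    rewrite -[X in h m (madd X _)](congr_emb_dsum_r A B) -congr_madd => H.
    apply: Rle_trans H _.
    have := hcongr (emb (@rshift n m)) (madd (dsum A B) P) Hnm Hm.
    have := opnorm_emb_r n m. have := h0 (madd (dsum A B) P) Hnm. nra.
Qed.

Lemma maddNz n (z : Mat Z n n) : madd (mopp z) z = @mzero Z n.
Proof. apply: mx_ext => i j; rewrite /madd /mopp /mzero; exact: vaddN. Qed.

Lemma ind_K n (z : Mat Z n n) : (0 < n)%N -> K n z <-> nu (mopp z) = 0.
Proof.
move=> Hn; split.
- move=> Hz; apply: Rle_antisym; last exact: nu_ge0.
  have := nu_le (mopp z) Hn Hz. by rewrite maddNz hzero.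
- move=> H0.
  have Hk : forall k : nat, exists p, K n p /\ h n (madd (mopp z) p) < / (INR k + 1).
    move=> k. have := nu_approx (mopp z) Hn (ltac:(apply: Rinv_0_lt_compat; have := pos_INR k; lra) : 0 < / (INR k + 1)).
    by rewrite H0 Rplus_0_l.
  pose zs k := proj1_sig (constructive_indefinite_description _ (Hk k)).
  have Hzs : forall k, K n (zs k) /\ h n (madd (mopp z) (zs k)) < / (INR k + 1).
    move=> k; exact: (proj2_sig (constructive_indefinite_description _ (Hk k))).
  apply: (hclosed' (zs := zs)) => //.
    move=> k; exact: (proj1 (Hzs k)).
  move=> eps Heps. have [N [HN1 HN2]] := archimed_cor1 eps Heps.
  exists N => k Hk'. rewrite /R_dist msubE Rminus_0_r Rabs_pos_eq; last exact: h0.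
  have HNp := lt_0_INR _ HN2.
  have HNk : INR N <= INR k + 1 by have := le_INR _ _ Hk'; lra.
  have := Rinv_le_contravar _ _ HNp HNk.
  have := proj2 (Hzs k). lra.
Qed.

Lemma ind_h n (z : Mat Z n n) : (0 < n)%N -> h n z = Rmax (nu z) (nu (mopp z)).
Proof.
move=> Hn; apply: Rle_antisym.
- apply: le_of_eps => e He.
  have [p [Hp Hpz]] := nu_approx z Hn He.
  have [q [Hq Hqz]] := nu_approx (mopp z) Hn He.
  have := hnorm (x:=madd z (mopp q)) (y:=z) (w:=madd z p) Hn.
  rewrite msub_subK msub_addK => H; have := H Hq Hp.
  have -> : h n (madd z (mopp q)) = h n (madd (mopp z) q).
    by rewrite -hopp // mopp_madd moppK.
  move=> H2; apply: Rle_trans H2 _.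
  apply: Rmax_lub.
  + have := Rmax_r (nu z) (nu (mopp z)); lra.
  + have := Rmax_l (nu z) (nu (mopp z)); lra.
- apply: Rmax_lub.
  + have := nu_le z Hn (K0 Hn). by rewrite madd0r.
  + have := nu_le (mopp z) Hn (K0 Hn). by rewrite madd0r hopp.
Qed.

Lemma moppE' n (z : Mat Z n n) : mopp z = mscal (Copp C1) z.
Proof. apply: mx_ext => i j; rewrite /mopp /mscal; by rewrite vscalm1. Qed.

Lemma nu_CProper : gauge_CProper nu.
Proof.
move=> z H1 H2 H3 H4.
have K1 : K 1%N (mopp z) by apply/ind_K => //; rewrite moppK.
have K2 : K 1%N z by apply/ind_K => //; rewrite moppE'.
have K3 : K 1%N (mopp (mscal Ci z)) by apply/ind_K => //; rewrite moppK.
have K4 : K 1%N (mopp (mscal (Copp Ci) z)) by apply/ind_K => //; rewrite moppK.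
apply: KCP; split => //; split; [|split].
- exists (mopp z); split => //. rewrite moppE' mscalA.
  set c := Cmul _ _. have -> : c = C1 by rewrite /c; apply: Ceq => /=; ring.
  by rewrite mscal1.
- exists (mopp (mscal Ci z)); split => //. rewrite moppE' !mscalA.
  set c := Cmul _ _. have -> : c = C1 by rewrite /c; apply: Ceq => /=; ring.
  by rewrite mscal1.
- exists (mopp (mscal (Copp Ci) z)); split => //. rewrite moppE' !mscalA.
  set c := Cmul _ _. have -> : c = C1 by rewrite /c; apply: Ceq => /=; ring.
  by rewrite mscal1.
Qed.

Lemma main_result : is_CProper_matrix_gauge nu /\ induces nu K h.
Proof.
split; first split.
- split; first by move=> n x Hn; exact: nu_ge0.
  split; first by move=> n x y Hn; exact: nu_add.
  split; first by move=> n t x Hn Ht; exact: nu_scal.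
  split; first by move=> n k X A Hn Hk; exact: nu_congr.
  move=> n m A B Hn Hm; exact: nu_dsum.
- exact: nu_CProper.
- move=> n Hn; split => z; [exact: ind_K | exact: ind_h].
Qed.
End Main.

Theorem proposition5p3 (Z : CVS) (Zac : forall n, Mat Z n n -> Prop)
  (h : forall n, Mat Z n n -> R) :
  normal_accretive_operator_space Zac h ->
  is_CProper_matrix_gauge (nu_max Zac h) /\ induces (nu_max Zac h) Zac h.
Proof. move=> H; exact: main_result. Qed.
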